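(* Let $(X_1,X_2)$ be an extensible pair and $\gamma\in\mathcal H_2$. Then the following are equivalent: (i) $|\gamma|_{(X_1,X_2)}=0$; (ii) $\gamma^{(k)}\in Q(Z_k)$ for all sufficiently large $k$; (iii) $\gamma^{(k)}\in Q(Z_k)$ for infinitely many values of $k$.
   Context: Marked Dynkin diagram $(X,\xi)$: Dynkin diagram of a symmetrizable generalized Cartan matrix $C(X)$ with distinguished node $\xi$; $\det X=\det C(X)$; $X(-1)$ is $X$ minus $\xi$ ($\det\emptyset=1$); $\Delta_X=\det X-\det X(-1)$. $(X_1,X_2)$ is an extensible pair if $\det X_i\ne0$, $\Delta_i:=\Delta_{X_i}\ne0$, $\gcd(\det X_i,\Delta_i)=1$ ($i=1,2$), $\gcd(\Delta_1,\Delta_2)=1$. $Z_k$ is obtained from the disjoint union of $X_1$, a path $A_k$ (nodes $1,\dots,k$) and $X_2$ by adding simple edges $\xi_1$—$1$ and $k$—$\xi_2$; $\omega_p,\alpha_p$ are fundamental weights and simple roots of $\mathfrak g(Z_k)$, $Q(Z_k)$ the root lattice. Numberings: if $X$ has $d$ nodes, a numbering is a bijection $\epsilon:N(X)\to\{1,\dots,d\}$ with $\epsilon(\xi)=d$. $X(m)$ ($m\ge0$) is $X$ with a path of $m$ new nodes $\xi-1-2-\cdots-m$ attached at $\xi$, numbered by $j(p)=\epsilon(p)$ on $X$ and $j=d+t$ on the $t$-th new node; $\bar\omega^{(m)}$ is the fundamental weight of $\mathfrak g(X(m))$ at the node with $j=d+m$. For $X$ extensible ($\det X\ne0$, $\Delta_X\ne0$,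 $\gcd(\det X,\Delta_X)=1$) there is (by earlier work of Kleber and the author) a unique integer sequence $(a_i)_{i\ge1}$ such that for all $m\ge0$ with $\det X(m)\ne0$ and all $p\in X(m)$, $-\Delta_X\omega_p-a_{j(p)}\bar\omega^{(m)}\in Q(X(m))$. Fix numberings $\epsilon_1,\epsilon_2$ of $X_1,X_2$ ($d_i$ = number of nodes of $X_i$) and let $(a_i^{(1)}),(a_i^{(2)})$ be the corresponding sequences. On $Z_k$ define numberings $i,\bar\imath$: $i(p)=\epsilon_1(p)$ for $p\in X_1$, $i(p)=d_1+t$ for the $t$-th node of $A_k$, $i(p)=d_1+d_2+k+1-\epsilon_2(p)$ for $p\in X_2$; $\bar\imath(p)=\epsilon_2(p)$ for $p\in X_2$, $\bar\imath(p)=d_2+k+1-t$ for the $t$-th node of $A_k$, $\bar\imath(p)=d_1+d_2+k+1-\epsilon_1(p)$ for $p\in X_1$. $\mathcal H_1$ is the set of integer sequences $x=(x_1,x_2,\dots)$ with finitely many nonzero terms, $\ell(x)=\max\{i:x_i\ne0\}$; $\mathcal H_2=\mathcal H_1\times\mathcal H_1$. For $\gamma=(x,y)$: $\mathrm{ls}(\gamma)=\max(\ell(x),d_1)$, $\mathrm{rs}(\gamma)=\max(\ell(y),d_2)$, $\ell(\gamma)=\mathrm{ls}+\mathrm{rs}$, and for $k\ge\ell(\gamma)-d_1-d_2$, $\gamma^{(k)}=\sum_{p\in Z_k}(x_{i(p)}+y_{\bar\imath(p)})\omega_p$. The number of boxes is $|\gamma|_{(X_1,X_2)}=\Delta_2\sum_ix_ia_i^{(1)}-\Delta_1\sum_iy_ia_i^{(2)}$.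 *)

(* Defs.v *)
From mathcomp Require Import all_boot all_order all_algebra.
Set Implicit Arguments. Unset Strict Implicit. Unset Printing Implicit Defensive.
Import Order.TTheory GRing.Theory Num.Theory.
Local Open Scope ring_scope.

(* A marked Dynkin diagram (X, xi) with d nodes, together with a numbering
   eps (eps(xi) = d), is represented by its generalized Cartan matrix
   C : nat -> nat -> int, where the node numbered j (1 <= j <= d) has
   0-based index j-1; hence xi has index d-1.  Only entries with both
   indices < d are relevant.  Convention (Kac): C i j = <alpha_i^vee, alpha_j>,
   so alpha_j = sum_i C i j * omega_i. *)

Definition cmx (n : nat) (C : nat -> nat -> int) : 'M[int]_n :=
  \matrix_(i < n, j < n) C i j.

Definition detC (n : nat) (C : nat -> nat -> int) : int := \det (cmx n C).

Definition is_GCM (n : nat) (C : nat -> nat -> int) : Prop :=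
  [/\ (forall i, (i < n)%N -> C i i = 2),
      (forall i j, (i < n)%N -> (j < n)%N -> i != j -> C i j <= 0) &
      (forall i j, (i < n)%N -> (j < n)%N -> (C i j == 0) = (C j i == 0))].

(* C = D B with D positive diagonal and B symmetric, i.e. s_j C_ij = s_i C_ji
   for some positive s (which may be taken integral after clearing denominators). *)
Definition symmetrizable (n : nat) (C : nat -> nat -> int) : Prop :=
  exists s : nat -> int, (forall i, (i < n)%N -> 0 < s i) /\
    (forall i j, (i < n)%N -> (j < n)%N -> s j * C i j = s i * C j i).

Definition marked_diagram (d : nat) (C : nat -> nat -> int) : Prop :=
  [/\ (0 < d)%N, is_GCM d C & symmetrizable d C].

(* Delta_X = det X - det X(-1); X(-1) = X minus xi = first d-1 nodes. *)
Definition Delta (d : nat) (C : nat -> nat -> int) : int :=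
  detC d C - detC d.-1 C.

Definition extensible (d : nat) (C : nat -> nat -> int) : Prop :=
  [/\ detC d C != 0, Delta d C != 0 & coprimez (detC d C) (Delta d C)].

Definition extensible_pair d1 C1 d2 C2 : Prop :=
  [/\ extensible d1 C1, extensible d2 C2 & coprimez (Delta d1 C1) (Delta d2 C2)].

(* weight sum_i c_i omega_i lies in the root lattice of the Cartan matrix C
   (size n): it is an integral combination sum_j v_j alpha_j. *)
Definition in_root_lattice (n : nat) (C : nat -> nat -> int) (c : nat -> int) : Prop :=
  exists v : nat -> int, forall i, (i < n)%N -> c i = \sum_(j < n) C i j * v j.

Definition adjacent (t u : nat) : bool := (t.+1 == u) || (u.+1 == t).

(* X(m): X with a path xi - 1 - ... - m attached; new t-th node has index d+t-1
   (numbering j = d + t). *)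
Definition ext_mx (d : nat) (C : nat -> nat -> int) (m : nat) : nat -> nat -> int :=
  fun t u => if (t < d)%N && (u < d)%N then C t u
             else if t == u then 2 else if adjacent t u then -1 else 0.

(* The defining property of the sequence (a_i)_{i>=1} attached to (X, eps):
   for all m with det X(m) <> 0 and all p in X(m),
   -Delta_X omega_p - a_{j(p)} omega_bar^(m) in Q(X(m)).
   (a 0 is irrelevant.) *)
Definition is_a_seq (d : nat) (C : nat -> nat -> int) (a : nat -> int) : Prop :=
  forall m : nat, detC (d + m) (ext_mx d C m) != 0 ->
    forall t, (t < d + m)%N ->
      in_root_lattice (d + m) (ext_mx d C m)
        (fun s => - Delta d C * (if s == t then 1 else 0)
                  - a t.+1 * (if s == (d + m).-1 then 1 else 0)).

(* Z_k, nodes indexed by the numbering i (0-based index = i(p) - 1):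
   indices < d1 : X1 (eps1), next k : the path A_k, last d2 : X2 where the
   index t corresponds to the X2 node with eps2 = d1+d2+k - t. *)
Definition zmat d1 (C1 : nat -> nat -> int) d2 (C2 : nat -> nat -> int) (k : nat)
  : nat -> nat -> int :=
  fun t u =>
    let n := (d1 + d2 + k)%N in
    if (t < d1)%N && (u < d1)%N then C1 t u
    else if (d1 + k <= t)%N && (d1 + k <= u)%N then C2 (n - 1 - t)%N (n - 1 - u)%N
    else if t == u then 2 else if adjacent t u then -1 else 0.

(* Elements of H_1: finitely supported integer sequences x = (x_1, x_2, ...),
   represented by a finite list [:: x_1; x_2; ...]. *)
Definition sq (x : seq int) (i : nat) : int :=
  if i is i'.+1 then nth 0 x i' else 0.

Definition ell (x : seq int) : nat :=
  \max_(i < size x | nth (0:int) x i != 0) i.+1.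

Definition lsg (d1 : nat) (x : seq int) : nat := maxn (ell x) d1.
Definition rsg (d2 : nat) (y : seq int) : nat := maxn (ell y) d2.

Definition gamma_defined d1 d2 (x y : seq int) (k : nat) : Prop :=
  (lsg d1 x + rsg d2 y <= d1 + d2 + k)%N.

(* coefficient of omega_p in gamma^(k), p of 0-based index t, i.e. i(p) = t+1,
   ibar(p) = d1+d2+k - t. *)
Definition gamma_k d1 d2 (x y : seq int) (k : nat) : nat -> int :=
  fun t => sq x t.+1 + sq y (d1 + d2 + k - t)%N.

Definition gamma_in_Q d1 C1 d2 C2 (x y : seq int) (k : nat) : Prop :=
  in_root_lattice (d1 + d2 + k) (zmat d1 C1 d2 C2 k) (gamma_k d1 d2 x y k).

Definition boxes d1 C1 d2 C2 (a1 a2 : nat -> int) (x y : seq int) : int :=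
  Delta d2 C2 * (\sum_(i < size x) nth 0 x i * a1 i.+1)
  - Delta d1 C1 * (\sum_(i < size y) nth 0 y i * a2 i.+1).

(* Main.v *)
Require Import Defs.
From mathcomp Require Import all_boot all_order all_algebra.
From mathcomp Require Import zify ring.
Import Order.TTheory GRing.Theory Num.Theory.
Local Open Scope ring_scope.
Set Implicit Arguments. Unset Strict Implicit. Unset Printing Implicit Defensive.

Definition ind (a i : nat) : int := if i == a then 1 else 0.

Lemma sum_ind n (h : nat -> int) a :
  \sum_(t < n) h t * ind a t = if (a < n)%N then h a else 0.
Proof.
transitivity (\sum_(t < n | (t : nat) == a) h t).
  rewrite [RHS]big_mkcond; apply: eq_bigr => t _; rewrite /ind.
  by case: eqP => [->|_]; rewrite ?mulr1 ?mulr0.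
exact: big_ord1_eq.
Qed.

Lemma sum_ind' n (h : nat -> int) a :
  \sum_(t < n) ind a t * h t = if (a < n)%N then h a else 0.
Proof. by rewrite -(sum_ind n h a); apply: eq_bigr => t _; rewrite mulrC. Qed.

Lemma sum_cut n d (G : nat -> int) : (d <= n)%N ->
  \sum_(t < n) (if (t < d)%N then G t else 0) = \sum_(t < d) G t.
Proof.
move=> le; rewrite (big_ord_widen n G le) [RHS]big_mkcond; apply: eq_bigr => t _.
by case: ifP.
Qed.

Lemma sum_rev n (F : nat -> int) :
  \sum_(t < n) F t = \sum_(t < n) F (n - 1 - t)%N.
Proof.
rewrite -(big_mkord xpredT F) big_rev_mkord subn0.
by apply: eq_bigr => t _; congr F; lia.
Qed.

Section Lat.
Variables (n : nat) (M : nat -> nat -> int).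
Notation Q := (in_root_lattice n M).

Lemma Q_ext c c' : Q c -> (forall i, (i < n)%N -> c i = c' i) -> Q c'.
Proof. move=> [v hv] E; exists v => i Hi; rewrite -E //; exact: hv. Qed.

Lemma Q0 : Q (fun _ => 0).
Proof. exists (fun _ => 0) => i _; by rewrite big1 // => j _; rewrite mulr0. Qed.

Lemma QD c1 c2 : Q c1 -> Q c2 -> Q (fun i => c1 i + c2 i).
Proof.
move=> [v1 h1] [v2 h2]; exists (fun j => v1 j + v2 j) => i Hi.
rewrite h1 // h2 // -big_split; apply: eq_bigr => j _; by rewrite mulrDr.
Qed.

Lemma QZ z c : Q c -> Q (fun i => z * c i).
Proof.
move=> [v h]; exists (fun j => z * v j) => i Hi.
rewrite h // mulr_sumr; apply: eq_bigr => j _; by rewrite mulrCA.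
Qed.

Lemma QN c : Q c -> Q (fun i => - c i).
Proof. move=> h; have h2 := QZ (-1) h; apply: (Q_ext h2) => i _. by rewrite mulN1r. Qed.

Lemma QB c1 c2 : Q c1 -> Q c2 -> Q (fun i => c1 i - c2 i).
Proof. by move=> h1 h2; apply: QD h1 (QN h2). Qed.

Lemma Qcol u : (u < n)%N -> Q (fun i => M i u).
Proof.
move=> Hu; exists (ind u) => i _; by rewrite (sum_ind n (M i)) Hu.
Qed.

Lemma Qsum m (F : nat -> nat -> int) : (forall t, (t < m)%N -> Q (F t)) ->
  Q (fun i => \sum_(t < m) F t i).
Proof.
elim: m => [|m IH] H.
  by apply: (Q_ext (Q0)) => i _; rewrite big_ord0.
have h2 := QD (IH (fun t Ht => H t (ltnW Ht))) (H m (ltnSn m)); apply: (Q_ext h2).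
move=> i _; by rewrite big_ord_recr.
Qed.

Lemma Qlin c c1 c2 (z1 z2 : int) : Q c1 -> Q c2 ->
  (forall i, (i < n)%N -> c i = z1 * c1 i + z2 * c2 i) -> Q c.
Proof. move=> h1 h2 E; have h3 := QD (QZ z1 h1) (QZ z2 h2); apply: (Q_ext h3) => i Hi; by rewrite E. Qed.

End Lat.

Lemma Q_extM n M M' c : (forall t u, (t < n)%N -> (u < n)%N -> M t u = M' t u) ->
  in_root_lattice n M c -> in_root_lattice n M' c.
Proof.
move=> E [v h]; exists v => i Hi; rewrite h //; apply: eq_bigr => j _; by rewrite E.
Qed.

Lemma Q_mirror n M c : in_root_lattice n M c ->
  in_root_lattice n (fun t u => M (n - 1 - t)%N (n - 1 - u)%N) (fun i => c (n - 1 - i)%N).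
Proof.
move=> [v h]; exists (fun j => v (n - 1 - j)%N) => i Hi.
rewrite h; last lia.
by rewrite (sum_rev n (fun j => M (n - 1 - i)%N j * v j)).
Qed.

Definition bz (a b : int) : Prop := exists u v : int, u * a + v * b = 1.

Lemma bz_sym a b : bz a b -> bz b a.
Proof. by move=> [u [v h]]; exists v, u; rewrite addrC. Qed.

Lemma bz_mul a b c : bz a b -> bz a c -> bz a (b * c).
Proof.
move=> [u [v h]] [u' [v' h']]; exists (u * u' * a + u * v' * c + v * b * u'), (v * v').
rewrite -[1]mul1r -{1}h -h'; ring.
Qed.

Lemma bz_shift a b z : bz a b -> bz a (b + z * a).
Proof. move=> [u [v h]]; exists (u - v * z), v; rewrite -h; ring. Qed.

Lemma bz_opp a b : bz a b -> bz a (- b).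
Proof. move=> [u [v h]]; exists u, (- v); rewrite -h; ring. Qed.

Lemma bz_coprime a b : coprimez a b -> bz a b.
Proof. by move/coprimezP => [[u v] /= h]; exists u, v. Qed.

Definition Fx d C (t : nat) : int := \adj (cmx d.-1.+1 C) ord_max (inord t).
Definition Gc d C (t u : nat) : int := \adj (cmx d.-1.+1 C) (inord u) (inord t).

Lemma ord_sum e (h : nat -> int) : \sum_(j < e) h (j : nat) = \sum_(j < e) h j.
Proof. by []. Qed.

Lemma L1 d C u : (0 < d)%N -> (u < d)%N ->
  \sum_(t < d) Fx d C t * C t u = detC d C * ind d.-1 u.
Proof.
case: d => // e _ Hu.
have := congr1 (fun A : 'M[int]_e.+1 => A ord_max (inord u)) (mul_adj_mx (cmx e.+1 C)).
rewrite /= !mxE => E.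
have -> : detC e.+1 C * ind e.+1.-1 u = \det (cmx e.+1 C) *+ (ord_max == inord u :> 'I_e.+1).
  have -> : (ord_max == inord u :> 'I_e.+1) = (u == e).
    apply/eqP/eqP => [H|->]; last by apply: val_inj; rewrite /= inordK.
    by have := congr1 val H; rewrite /= inordK.
  by rewrite /detC /ind /=; case: eqP; rewrite ?mulr1 ?mulr0.
rewrite -E; apply: eq_bigr => j _; by rewrite /Fx /= inord_val !mxE inordK.
Qed.

Lemma L1b d C : (0 < d)%N -> Fx d C d.-1 = detC d.-1 C.
Proof.
case: d => // e _ /=.
rewrite /Fx /= mxE.
have -> : inord e = ord_max :> 'I_e.+1 by apply: val_inj; rewrite /= inordK.
rewrite /cofactor /= addnn.
rewrite -signr_odd odd_double expr0 mul1r /detC; congr (\det _).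
apply/matrixP => i j; rewrite !mxE; congr C; by rewrite lift_max.
Qed.

Lemma L2 d (C : nat -> nat -> int) (s t : nat) : (0 < d)%N -> (s < d)%N -> (t < d)%N ->
  \sum_(u < d) C s (u : nat) * Gc d C t u = detC d C * ind t s.
Proof.
case: d => // e _ Hs Ht.
have := congr1 (fun A : 'M[int]_e.+1 => A (inord s) (inord t)) (mul_mx_adj (cmx e.+1 C)).
rewrite /= !mxE => E.
have -> : detC e.+1 C * ind t s = \det (cmx e.+1 C) *+ (inord s == inord t :> 'I_e.+1).
  have -> : (inord s == inord t :> 'I_e.+1) = (s == t).
    apply/eqP/eqP => [H|->] //.
    by have := congr1 val H; rewrite /= !inordK.
  by rewrite /detC /ind /=; case: eqP; rewrite ?mulr1 ?mulr0.
rewrite -E; apply: eq_bigr => j _; by rewrite /Gc /= inord_val !mxE inordK.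
Qed.

Lemma Gc_last d C t : (0 < d)%N -> Gc d C t d.-1 = Fx d C t.
Proof.
case: d => // e _; rewrite /Gc /Fx /=.
by have -> : inord e = ord_max :> 'I_e.+1 by apply: val_inj; rewrite /= inordK.
Qed.

Ltac crush := repeat (case: ifP => ?); rewrite ?subr0 ?sub0r ?opprK //=; try lia.

Lemma ext_X d C m t u : (u < d)%N ->
  ext_mx d C m t u = (if (t < d)%N then C t u else 0) - (if u == d.-1 then ind d t else 0).
Proof. move=> Hu; rewrite /ext_mx /ind /adjacent; crush. Qed.

Lemma ext_P d C m t u : (0 < d <= u)%N ->
  ext_mx d C m t u = 2 * ind u t - ind u.-1 t - ind u.+1 t.
Proof. move=> Hu; rewrite /ext_mx /ind /adjacent; crush. Qed.

Lemma sum_ind_c n (h : nat -> int) (a : int) p :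
  \sum_(t < n) h t * (a * ind p t) = if (p < n)%N then a * h p else 0.
Proof.
rewrite (eq_bigr (fun t : 'I_n => a * (h t * ind p t))); last by move=> t _; ring.
by rewrite -mulr_sumr sum_ind; case: ifP; rewrite ?mulr0.
Qed.

Lemma CSX d C m (h : nat -> int) u : (u < d)%N ->
  \sum_(t < d + m) h t * ext_mx d C m t u =
  \sum_(t < d) h t * C t u - (if (u == d.-1) && (d < d + m)%N then h d else 0).
Proof.
move=> Hu.
rewrite (eq_bigr (fun t : 'I_(d+m) => (if (t < d)%N then h t * C t u else 0)
   - (if u == d.-1 then h t * ind d t else 0))); last first.
  by move=> t _; rewrite ext_X // mulrBr; congr (_ - _); case: ifP; rewrite ?mulr0.
rewrite sumrB (sum_cut (fun t => h t * C t u)) ?leq_addr //; congr (_ - _).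
case: (u == d.-1) => /=; last by rewrite big1.
by rewrite sum_ind.
Qed.

Lemma CSP d C m (h : nat -> int) u : (0 < d <= u)%N -> (u < d + m)%N ->
  \sum_(t < d + m) h t * ext_mx d C m t u =
  2 * h u - h u.-1 - (if (u.+1 < d + m)%N then h u.+1 else 0).
Proof.
move=> Hu Hn.
rewrite (eq_bigr (fun t : 'I_(d+m) => h t * (2 * ind u t) - h t * (1 * ind u.-1 t)
   - h t * (1 * ind u.+1 t))); last by move=> t _; rewrite ext_P //; ring.
rewrite !sumrB !sum_ind_c Hn.
have -> : (u.-1 < d + m)%N by lia.
case: ifP; rewrite ?mul1r //; ring.
Qed.

Lemma path_rec n d (p : nat -> int) : (0 < d)%N -> (d <= n)%N ->
  (forall u, (d <= u < n)%N -> 2 * p u - p u.-1 - (if (u.+1 < n)%N then p u.+1 else 0) = 0) ->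
  forall i, (i <= n - d)%N -> p (n.-1 - i)%N = (i%:Z + 1) * p n.-1.
Proof.
move=> Hd Hdn H.
suff S : forall i, (i <= n - d)%N -> p (n.-1 - i)%N = (i%:Z + 1) * p n.-1 /\
   ((0 < i)%N -> p (n.-1 - i).+1 = i%:Z * p n.-1).
  by move=> i Hi; case: (S i Hi).
elim => [|i IH] Hi.
  by rewrite subn0 mul1r; split.
have [IH1 IH2] := IH (ltnW Hi).
have E := H (n.-1 - i)%N ltac:(lia).
have e1 : (n.-1 - i).-1 = (n.-1 - i.+1)%N by lia.
have -> : (n.-1 - i.+1).+1 = (n.-1 - i)%N by lia.
rewrite e1 in E.
split; last by move=> _; rewrite IH1; congr (_ * _); lia.
move: E; case: (posnP i) => [Hi0|Hi0].
  subst i; have -> : ((n.-1 - 0).+1 < n)%N = false by lia.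
  rewrite IH1 subr0 => E.
  have -> : p (n.-1 - 1)%N = 2 * ((0%Z + 1) * p n.-1) - (2 * ((0%Z + 1) * p n.-1) - p (n.-1 - 1)%N) by ring.
  rewrite E; ring.
have -> : ((n.-1 - i).+1 < n)%N = true by lia.
rewrite IH1 (IH2 Hi0) => E.
set b := p (n.-1 - i.+1)%N in E *.
have -> : b = 2 * ((i%:Z + 1) * p n.-1) - i%:Z * p n.-1 - (2 * ((i%:Z + 1) * p n.-1) - b - i%:Z * p n.-1) by ring.
have hi : (i.+1)%:Z = i%:Z + 1 by lia.
rewrite E hi; ring.
Qed.

Lemma L3 d C m : (0 < d)%N -> detC d C != 0 -> detC d C + m%:Z * Delta d C != 0 ->
  detC (d + m) (ext_mx d C m) != 0.
Proof.
case: d => // e _ HD HN.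
apply/negP => /det0P [v vn0 vA0].
pose p (t : nat) : int := v 0 (inord t : 'I_(e + m).+1).
have col : forall u, (u < e.+1 + m)%N ->
    \sum_(t < e.+1 + m) p t * ext_mx e.+1 C m t u = 0.
  move=> u Hu; have := congr1 (fun w : 'rV_(e.+1 + m) => w 0 (inord u : 'I_(e + m).+1)) vA0.
  rewrite !mxE => E; rewrite -[RHS]E; apply: eq_bigr => j _; by rewrite /p inord_val /cmx !mxE inordK.
have pathE : forall u, (e.+1 <= u < e.+1 + m)%N ->
    2 * p u - p u.-1 - (if (u.+1 < e.+1 + m)%N then p u.+1 else 0) = 0.
  move=> u /andP [H1 H2]; rewrite -(CSP C p (m := m) (d := e.+1)) ?H1 ?col //.
have rec := path_rec (n := e.+1 + m) (d := e.+1) (p := p) (ltn0Sn e) (leq_addr _ _) pathE.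
have Xeq : forall u, (u < e.+1)%N ->
    \sum_(t < e.+1) p t * C t u = if (u == e) && (e.+1 < e.+1 + m)%N then p e.+1 else 0.
  move=> u Hu; apply/eqP; rewrite -subr_eq0; apply/eqP.
  by rewrite -(CSX C m p Hu) col // ltn_addr.
have key : forall s, (s < e.+1)%N ->
    detC e.+1 C * p s = if (0 < m)%N then p e.+1 * Fx e.+1 C s else 0.
  move=> s Hs.
  have -> : detC e.+1 C * p s = \sum_(t < e.+1) p t * (detC e.+1 C * ind s t).
    by rewrite sum_ind_c Hs.
  have -> : \sum_(t < e.+1) p t * (detC e.+1 C * ind s t) =
      \sum_(t < e.+1) p t * \sum_(u < e.+1) C t u * Gc e.+1 C s u.
    by apply: eq_bigr => t _; rewrite L2.
  have -> : \sum_(t < e.+1) p t * \sum_(u < e.+1) C t u * Gc e.+1 C s u =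
      \sum_(u < e.+1) (\sum_(t < e.+1) p t * C t u) * Gc e.+1 C s u.
    rewrite (eq_bigr (fun t : 'I_e.+1 => \sum_(u < e.+1) p t * (C t u * Gc e.+1 C s u)));
      last by move=> t _; rewrite mulr_sumr.
    rewrite exchange_big /=; apply: eq_bigr => u _; rewrite mulr_suml.
    by apply: eq_bigr => t _; rewrite mulrA.
  rewrite (eq_bigr (fun u : 'I_e.+1 => (if (0 < m)%N then p e.+1 * Gc e.+1 C s e else 0) * ind e u)).
    rewrite (sum_ind e.+1 (fun _ => (if (0 < m)%N then p e.+1 * Gc e.+1 C s e else 0)) e) ltnSn.
    by rewrite (Gc_last C s (ltn0Sn e)).
  move=> u _; rewrite Xeq // /ind.
  have -> : (e.+1 < e.+1 + m)%N = (0 < m)%N by lia.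
  case Hm: (0 < m)%N; last by rewrite andbF !mul0r.
  rewrite andbT; case: eqP => [->|_]; by rewrite ?mulr1 ?mulr0 ?mul0r.
have pz : forall t, (t < e.+1 + m)%N -> p t = 0.
  case: (posnP m) => [Hm0|Hm].
    move=> t Ht; have := key t ltac:(lia); rewrite Hm0 /= => /eqP.
    by rewrite mulf_eq0 (negPf HD) /= => /eqP.
  set P := p (e.+1 + m).-1.
  have Pe : p e = (m%:Z + 1) * P.
    by have := rec m ltac:(lia); have -> : ((e.+1 + m).-1 - m)%N = e by lia.
  have Pe1 : p e.+1 = (m.-1%:Z + 1) * P.
    by have := rec m.-1 ltac:(lia); have -> : ((e.+1 + m).-1 - m.-1)%N = e.+1 by lia.
  have hm : m.-1%:Z + 1 = m%:Z by lia.
  rewrite hm in Pe1.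
  have P0 : P = 0.
    have := key e (ltnSn e); rewrite Hm Pe Pe1 (L1b C (ltn0Sn e)) /= => E.
    apply/eqP; move: HN; apply: contraNeq => HP.
    have : (detC e.+1 C + m%:Z * Delta e.+1 C) * P = 0.
      rewrite /Delta /=.
      have -> : (detC e.+1 C + m%:Z * (detC e.+1 C - detC e C)) * P =
        detC e.+1 C * ((m%:Z + 1) * P) - m%:Z * P * detC e C by ring.
      by rewrite E subrr.
    have HP' : P != 0 by move: HP; case: (P == 0).
    by move/eqP; rewrite mulf_eq0 (negPf HP') orbF.
  move=> t Ht; case: (leqP t e) => Hte.
    have := key t ltac:(lia); rewrite Hm Pe1 P0 mulr0 mul0r => /eqP.
    by rewrite mulf_eq0 (negPf HD) /= => /eqP.
  have := rec ((e.+1 + m).-1 - t)%N ltac:(lia).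
  have -> : ((e.+1 + m).-1 - ((e.+1 + m).-1 - t))%N = t by lia.
  by rewrite -/P P0 mulr0.
move/negP: vn0; apply; apply/eqP/rowP => j; rewrite mxE.
have := pz j (ltn_ord j); by rewrite /p inord_val.
Qed.

Lemma bound (D X : int) (m B : nat) : X != 0 -> (absz D + B < m)%N -> (B < absz (D + m%:Z * X)%R)%N.
Proof.
move=> HX Hm.
have [HX1|HX1] : (1 <= X) \/ (X <= -1) by lia.
  have : m%:Z <= m%:Z * X by rewrite ler_peMr //; lia.
  lia.
have : m%:Z * X <= - m%:Z by rewrite -mulrN1 ler_wpM2l //; lia.
lia.
Qed.

Lemma small_dvd (N z : int) : (N %| z)%Z -> (absz z < absz N)%N -> z = 0.
Proof.
rewrite dvdzE => H Hlt; apply/eqP; rewrite -absz_eq0; apply/eqP.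
case: (posnP (absz z)) => // Hz.
have := dvdn_leq Hz H; lia.
Qed.

Definition fx d C t : int :=
  if (t < d.-1)%N then Fx d C t else detC d.-1 C + (t - d.-1)%:Z * Delta d C.

Lemma fx_lt d C t : (0 < d)%N -> (t < d)%N -> fx d C t = Fx d C t.
Proof.
move=> Hd Ht; rewrite /fx; case: ifP => // H.
have -> : t = d.-1 by lia.
by rewrite subnn mul0r addr0 L1b.
Qed.

Lemma fx_ge d C t : (d.-1 <= t)%N -> fx d C t = detC d.-1 C + (t - d.-1)%:Z * Delta d C.
Proof. by move=> H; rewrite /fx ltnNge H. Qed.

Lemma fx_d d C : (0 < d)%N -> fx d C d = detC d C.
Proof.
move=> Hd; rewrite fx_ge; last lia.
have -> : (d - d.-1)%N = 1%N by lia.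
rewrite /Delta mul1r; ring.
Qed.

Lemma fx_lin d C t : (d.-1 < t)%N ->
  fx d C t.-1 + fx d C t.+1 = 2 * fx d C t.
Proof.
move=> H; rewrite !fx_ge; try lia.
have -> : (t.-1 - d.-1)%:Z = (t - d.-1)%:Z - 1 by lia.
have -> : (t.+1 - d.-1)%:Z = (t - d.-1)%:Z + 1 by lia.
ring.
Qed.

Lemma fx_colsum d C m u : (0 < d)%N -> (0 < m)%N -> (u < d + m)%N ->
  \sum_(t < d + m) fx d C t * ext_mx d C m t u =
  if u == (d + m).-1 then detC d C + m%:Z * Delta d C else 0.
Proof.
move=> Hd Hm Hu.
case: (ltnP u d) => Hud.
  rewrite CSX //.
  rewrite (eq_bigr (fun t : 'I_d => Fx d C t * C t u)); last first.
    by move=> t _; rewrite fx_lt.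
  rewrite L1 // fx_d // /ind.
  have -> : (d < d + m)%N by lia.
  have -> : (u == (d + m).-1) = false by apply/eqP; lia.
  by case: eqP => _; rewrite ?mulr1 ?mulr0 /= ?subrr ?subr0.
rewrite CSP //; last by lia.
case: ifP => Hu1.
  have -> : (u == (d + m).-1) = false by apply/eqP; lia.
  have := @fx_lin d C u ltac:(lia).
  move=> E; rewrite -E; ring.
have -> : u = (d + m).-1 by lia.
rewrite eqxx subr0.
rewrite !fx_ge; try lia.
have -> : ((d + m).-1.-1 - d.-1)%:Z = m%:Z - 1 by lia.
have -> : ((d + m).-1 - d.-1)%:Z = m%:Z by lia.
rewrite /Delta; ring.
Qed.

Lemma coprime_shift (D X : int) (m : nat) : bz X D -> bz X (D + m%:Z * X).
Proof. exact: bz_shift. Qed.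

Lemma L4 d C a : (0 < d)%N -> extensible d C -> is_a_seq d C a ->
  forall t, a t.+1 = fx d C t.
Proof.
move=> Hd [HD HX Hco] Ha t.
set z := a t.+1 - fx d C t.
pose m := (t + absz (detC d C) + absz z + 1)%N.
have Hm : (absz (detC d C) + absz z < m)%N by rewrite /m; lia.
have HN := bound HX Hm.
set N := detC d C + m%:Z * Delta d C in HN.
have HN0 : N != 0 by apply/eqP => E; rewrite E in HN.
have Hdet := L3 Hd HD HN0.
have Ht : (t < d + m)%N by rewrite /m; lia.
have [w Hw] := Ha m Hdet t Ht.
have E : \sum_(s < d + m) fx d C s *
   (- Delta d C * (if (s : nat) == t then 1 else 0) - a t.+1 * (if (s : nat) == (d + m).-1 then 1 else 0))
   = N * w (d + m).-1.
  rewrite (eq_bigr (fun s : 'I_(d+m) => fx d C s *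
     \sum_(j < d + m) ext_mx d C m s j * w j)); last by move=> s _; rewrite -Hw.
  rewrite (eq_bigr (fun s : 'I_(d+m) => \sum_(j < d + m) fx d C s * (ext_mx d C m s j * w j)));
    last by move=> s _; rewrite mulr_sumr.
  rewrite exchange_big /=.
  rewrite (eq_bigr (fun j : 'I_(d+m) => (\sum_(s < d + m) fx d C s * ext_mx d C m s j) * w j));
    last by move=> j _; rewrite mulr_suml; apply: eq_bigr => s _; rewrite mulrA.
  rewrite (eq_bigr (fun j : 'I_(d+m) => (N * w (d + m).-1) * ind (d + m).-1 j)).
    by rewrite (sum_ind (d + m) (fun _ => N * w (d + m).-1)) ifT //; lia.
  move=> j _; rewrite fx_colsum //; last lia.
  by rewrite /ind /N; case: eqP => [->|_]; rewrite ?mulr1 ?mulr0 ?mul0r.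
have E2 : \sum_(s < d + m) fx d C s *
   (- Delta d C * (if (s : nat) == t then 1 else 0) - a t.+1 * (if (s : nat) == (d + m).-1 then 1 else 0))
   = - Delta d C * fx d C t - a t.+1 * fx d C (d + m).-1.
  rewrite (eq_bigr (fun s : 'I_(d+m) => fx d C s * (- Delta d C * ind t s)
      - fx d C s * (a t.+1 * ind (d + m).-1 s))); last by move=> s _; rewrite /ind mulrBr.
  rewrite sumrB !sum_ind_c Ht.
  have -> : ((d + m).-1 < d + m)%N by lia.
  ring.
have Flast : fx d C (d + m).-1 = N - Delta d C.
  rewrite fx_ge; last lia.
  have -> : ((d + m).-1 - d.-1)%:Z = m%:Z by lia.
  rewrite /N /Delta; ring.
rewrite E2 Flast in E.
have Ez : Delta d C * z = N * (w (d + m).-1 + a t.+1).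
  rewrite /z; apply/eqP; rewrite -subr_eq0; apply/eqP.
  have -> : Delta d C * (a t.+1 - fx d C t) - N * (w (d + m).-1 + a t.+1) =
     - (N * w (d + m).-1 - (- Delta d C * fx d C t - a t.+1 * (N - Delta d C))) by ring.
  by rewrite E subrr oppr0.
have [u [v Huv]] : bz N (Delta d C).
  apply: bz_sym; apply: bz_shift; apply: bz_sym; apply: bz_sym.
  apply: bz_sym; exact: bz_coprime.
have Hdv : (N %| z)%Z.
  have -> : z = z * (u * N + v * Delta d C) by rewrite Huv mulr1.
  rewrite mulrDr; apply: rpredD.
    by rewrite mulrA; apply: dvdz_mull; exact: dvdzz.
  have -> : z * (v * Delta d C) = v * (Delta d C * z) by ring.
  by rewrite Ez; apply: dvdz_mull; apply: dvdz_mulr; exact: dvdzz.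
have := small_dvd Hdv; rewrite /z => H.
apply/eqP; rewrite -subr_eq0; apply/eqP; apply: H; lia.
Qed.


Lemma zX1 d1 C1 d2 C2 k t u : (u < d1)%N ->
  zmat d1 C1 d2 C2 k t u = (if (t < d1)%N then C1 t u else 0) - (if u == d1.-1 then ind d1 t else 0).
Proof. move=> Hu; rewrite /zmat /ind /adjacent; crush. Qed.

Lemma zP d1 C1 d2 C2 k t u : (0 < d1 <= u)%N -> (u < d1 + k)%N ->
  zmat d1 C1 d2 C2 k t u = 2 * ind u t - ind u.-1 t - ind u.+1 t.
Proof. move=> Hu Hu2; rewrite /zmat /ind /adjacent; crush. Qed.

Lemma zmat_mirror d1 C1 d2 C2 k t u : (t < d1 + d2 + k)%N -> (u < d1 + d2 + k)%N ->
  zmat d2 C2 d1 C1 k (d1 + d2 + k - 1 - t) (d1 + d2 + k - 1 - u) = zmat d1 C1 d2 C2 k t u.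
Proof.
move=> Ht Hu; rewrite /zmat /adjacent.
have -> : (d2 + d1 + k)%N = (d1 + d2 + k)%N by lia.
have E1 : ((d1 + d2 + k - 1 - t < d2) && (d1 + d2 + k - 1 - u < d2))%N =
          ((d1 + k <= t) && (d1 + k <= u))%N.
  by apply/idP/idP => /andP [? ?]; apply/andP; split; lia.
have E2 : ((d2 + k <= d1 + d2 + k - 1 - t) && (d2 + k <= d1 + d2 + k - 1 - u))%N =
          ((t < d1) && (u < d1))%N.
  by apply/idP/idP => /andP [? ?]; apply/andP; split; lia.
rewrite E1 E2.
have -> : (d1 + d2 + k - 1 - (d1 + d2 + k - 1 - t))%N = t by lia.
have -> : (d1 + d2 + k - 1 - (d1 + d2 + k - 1 - u))%N = u by lia.
have E3 : ((d1 + d2 + k - 1 - t)%N == (d1 + d2 + k - 1 - u)%N) = (t == u).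
  by apply/eqP/eqP; lia.
have E4 : ((d1 + d2 + k - 1 - t)%N.+1 == (d1 + d2 + k - 1 - u)%N) || ((d1 + d2 + k - 1 - u)%N.+1 == (d1 + d2 + k - 1 - t)%N)
        = (t.+1 == u) || (u.+1 == t).
  by apply/idP/idP => /orP [/eqP ?|/eqP ?]; apply/orP; [right|left|right|left]; apply/eqP; lia.
rewrite E3 E4.
case: ifP => H1; case: ifP => H2 //; exfalso; move: H1 H2 => /andP [? ?] /andP [? ?]; lia.
Qed.

Lemma Q_swap d1 C1 d2 C2 k c :
  in_root_lattice (d2 + d1 + k) (zmat d2 C2 d1 C1 k) c ->
  in_root_lattice (d1 + d2 + k) (zmat d1 C1 d2 C2 k) (fun i => c (d1 + d2 + k - 1 - i)%N).
Proof.
move=> H; have := Q_mirror H.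
have -> : (d2 + d1 + k)%N = (d1 + d2 + k)%N by lia.
apply: Q_extM => t u Ht Hu; exact: zmat_mirror.
Qed.

Lemma ZCX d1 C1 d2 C2 k (h : nat -> int) u : (u < d1)%N -> (0 < d2)%N ->
  \sum_(t < d1 + d2 + k) h t * zmat d1 C1 d2 C2 k t u =
  \sum_(t < d1) h t * C1 t u - (if u == d1.-1 then h d1 else 0).
Proof.
move=> Hu Hd2.
rewrite (eq_bigr (fun t : 'I_(d1+d2+k) => (if (t < d1)%N then h t * C1 t u else 0)
   - (if u == d1.-1 then h t * ind d1 t else 0))); last first.
  by move=> t _; rewrite zX1 // mulrBr; congr (_ - _); case: ifP; rewrite ?mulr0.
rewrite sumrB (sum_cut (fun t => h t * C1 t u)); last lia.
congr (_ - _); case: (u == d1.-1) => /=; last by rewrite big1.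
by rewrite sum_ind ifT //; lia.
Qed.

Lemma ZCP d1 C1 d2 C2 k (h : nat -> int) u : (0 < d1 <= u)%N -> (u < d1 + k)%N -> (0 < d2)%N ->
  \sum_(t < d1 + d2 + k) h t * zmat d1 C1 d2 C2 k t u =
  2 * h u - h u.-1 - h u.+1.
Proof.
move=> Hu Hn Hd2.
rewrite (eq_bigr (fun t : 'I_(d1+d2+k) => h t * (2 * ind u t) - h t * (1 * ind u.-1 t)
   - h t * (1 * ind u.+1 t))); last by move=> t _; rewrite zP //; ring.
rewrite !sumrB !sum_ind_c !ifT; try lia.
Qed.

Lemma ZR1 d1 C1 d2 C2 k (w : nat -> int) i : (0 < d1)%N -> (0 < d2)%N ->
  \sum_(j < d1 + d2 + k) zmat d1 C1 d2 C2 k i j * (if (j < d1)%N then w j else 0) =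
  (if (i < d1)%N then \sum_(j < d1) C1 i j * w j else 0) - ind d1 i * w d1.-1.
Proof.
move=> Hd1 Hd2.
rewrite (eq_bigr (fun j : 'I_(d1+d2+k) => if (j < d1)%N then zmat d1 C1 d2 C2 k i j * w j else 0));
  last by move=> j _; case: ifP; rewrite ?mulr0.
rewrite (sum_cut (fun j => zmat d1 C1 d2 C2 k i j * w j)); last lia.
rewrite (eq_bigr (fun j : 'I_d1 => (if (i < d1)%N then C1 i j * w j else 0)
   - w j * (ind d1 i * ind d1.-1 j))); last first.
  move=> j _; rewrite zX1 // /ind; repeat (case: ifP => ?); try lia; ring.
rewrite sumrB sum_ind_c.
rewrite ifT; last lia.
congr (_ - _).
by case: ifP => _ //; rewrite big1.
Qed.

Definition dl d i : int := ind d i - ind d.-1 i.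

Lemma ind_sym a i : ind a i = ind i a.
Proof. by rewrite /ind eq_sym. Qed.

Lemma ell_bound (z : seq int) t : nth 0 z t != 0 -> (t < ell z)%N.
Proof.
move=> H.
have Ht : (t < size z)%N by case: ltnP H => // Hs; rewrite nth_default.
rewrite /ell; exact: (leq_bigmax_cond (Ordinal Ht)).
Qed.

Lemma sum_seq (z : seq int) (F : nat -> int) m : (ell z <= m)%N ->
  \sum_(t < m) nth 0 z t * F t = \sum_(i < size z) nth 0 z i * F i.
Proof.
move=> Hm.
have A : forall p q, (p <= q)%N -> (forall t, (p <= t < q)%N -> nth 0 z t = 0) ->
    \sum_(t < p) nth 0 z t * F t = \sum_(t < q) nth 0 z t * F t.
  move=> p q Hpq H0.
  rewrite -(sum_cut (fun t => nth 0 z t * F t) Hpq); apply: eq_bigr => t _.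
  case: ifP => // Ht; rewrite H0 ?mul0r //; rewrite ltn_ord andbT; lia.
rewrite (A m (m + size z)%N) ?leq_addr //; last first.
  move=> t /andP [H1 H2]; apply/eqP; apply: contraT => Hn.
  have := ell_bound Hn; lia.
rewrite [RHS](A (size z) (m + size z)%N) ?leq_addl //.
move=> t /andP [H1 H2]; by rewrite nth_default.
Qed.

Section OneSide.
Variables (d1 d2 k : nat) (C1 C2 : nat -> nat -> int) (a1 : nat -> int).
Hypotheses (Hd1 : (0 < d1)%N) (Hd2 : (0 < d2)%N) (Hk : (0 < k)%N).
Hypotheses (Hext : extensible d1 C1) (Ha : is_a_seq d1 C1 a1).

Local Notation n := (d1 + d2 + k)%N.
Local Notation Z := (zmat d1 C1 d2 C2 k).
Local Notation QQ := (in_root_lattice n Z).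
Local Notation D := (detC d1 C1).
Local Notation X := (Delta d1 C1).
Local Notation f := (fx d1 C1).

Lemma LZ1 t : (t < d1)%N -> QQ (fun i => X * ind t i - f t * dl d1 i).
Proof.
move=> Ht.
case: Hext => HD HX Hco.
have HN : D + 0%:Z * X != 0 by rewrite mul0r addr0.
have Hdet := L3 Hd1 HD HN.
have Ht0 : (t < d1 + 0)%N by rewrite addn0.
have [w Hw] := Ha Hdet Ht0.
rewrite addn0 in Hw.
have Hw' : forall i, (i < d1)%N ->
    - X * ind t i - a1 t.+1 * ind d1.-1 i = \sum_(j < d1) C1 i j * w j.
  move=> i Hi; rewrite Hw //; apply: eq_bigr => j _.
  by rewrite /ext_mx Hi ltn_ord.
have Ea : a1 t.+1 = Fx d1 C1 t by rewrite (L4 Hd1 Hext Ha) fx_lt.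
have Ewx : w d1.-1 = - Fx d1 C1 t.
  apply: (mulfI HD).
  have E1 : D * w d1.-1 = \sum_(s < d1) Fx d1 C1 s * \sum_(j < d1) C1 s j * w j.
    rewrite (eq_bigr (fun s : 'I_d1 => \sum_(j < d1) Fx d1 C1 s * (C1 s j * w j)));
      last by move=> s _; rewrite mulr_sumr.
    rewrite exchange_big /=.
    rewrite (eq_bigr (fun j : 'I_d1 => (D * w d1.-1) * ind d1.-1 j)).
      by rewrite (sum_ind d1 (fun _ => D * w d1.-1)) ifT //; lia.
    move=> j _.
    rewrite (eq_bigr (fun s : 'I_d1 => (Fx d1 C1 s * C1 s j) * w j));
      last by move=> s _; rewrite mulrA.
    rewrite -mulr_suml L1 // /ind; case: eqP => [->|_]; ring.
  rewrite E1.
  rewrite (eq_bigr (fun s : 'I_d1 => Fx d1 C1 s * (- X * ind t s) - Fx d1 C1 s * (a1 t.+1 * ind d1.-1 s)));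
    last by move=> s _; rewrite -Hw' // mulrBr.
  rewrite sumrB !sum_ind_c Ht ifT; last lia.
  rewrite L1b // Ea /Delta; ring.
have HQ : QQ (fun i => (if (i < d1)%N then \sum_(j < d1) C1 i j * w j else 0) - ind d1 i * w d1.-1).
  exists (fun j => if (j < d1)%N then w j else 0) => i Hi; by rewrite ZR1.
have HQ2 := QN HQ.
apply: (Q_ext HQ2) => i Hi.
rewrite Ewx fx_lt // /dl.
case: ifP => Hid1.
  rewrite -Hw' // Ea /ind; repeat (case: ifP => ?); try lia; ring.
rewrite /ind; repeat (case: ifP => ?); try lia; ring.
Qed.

Lemma LZ3 t : (t < d1)%N -> QQ (fun i => D * ind t i - Fx d1 C1 t * ind d1 i).
Proof.
move=> Ht.
have HQ : QQ (fun i => (if (i < d1)%N then \sum_(j < d1) C1 i j * Gc d1 C1 t j else 0)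
   - ind d1 i * Gc d1 C1 t d1.-1).
  exists (fun j => if (j < d1)%N then Gc d1 C1 t j else 0) => i Hi; by rewrite ZR1.
apply: (Q_ext HQ) => i Hi.
rewrite Gc_last //; case: ifP => Hid1.
  rewrite L2 //; ring.
rewrite /ind; repeat (case: ifP => ?); try lia; ring.
Qed.

Lemma LZP j : (d1.-1 <= j <= d1 + k)%N ->
  QQ (fun i => ind j i - ind d1.-1 i - (j - d1.-1)%:Z * dl d1 i).
Proof.
suff S : forall l, (l <= k)%N ->
   QQ (fun i => ind (d1.-1 + l) i - ind d1.-1 i - ((d1.-1 + l) - d1.-1)%:Z * dl d1 i) /\
     QQ (fun i => ind (d1.-1 + l.+1) i - ind d1.-1 i - ((d1.-1 + l.+1) - d1.-1)%:Z * dl d1 i).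
  move=> /andP [H1 H2].
  case: (leqP (j - d1.-1) k) => Hjk.
    have := S (j - d1.-1)%N Hjk; have -> : (d1.-1 + (j - d1.-1))%N = j by lia.
    by case.
  have := S k (leqnn k); have -> : (d1.-1 + k.+1)%N = j by lia.
  by case.
elim => [|l IH] Hl.
  split.
    apply: (Q_ext (Q0 _ _)) => i _; rewrite addn0 subnn mul0r; ring.
  apply: (Q_ext (Q0 _ _)) => i _.
  have -> : (d1.-1 + 1)%N = d1 by lia.
  have -> : (d1 - d1.-1)%N = 1%N by lia.
  rewrite /dl; ring.
have [IH1 IH2] := IH (ltnW Hl).
split => //.
have Hcol : QQ (fun i => Z i (d1.-1 + l.+1)%N) by apply: Qcol; lia.
have Hu1 : (0 < d1 <= d1.-1 + l.+1)%N by lia.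
have Hu2 : (d1.-1 + l.+1 < d1 + k)%N by lia.
set u := (d1.-1 + l.+1)%N in Hcol Hu1 Hu2 *.
have H3 := QB (QB (QZ 2 IH2) IH1) Hcol.
apply: (Q_ext H3) => i Hi.
rewrite zP //.
have -> : u.-1 = (d1.-1 + l)%N by lia.
have -> : u.+1 = (d1.-1 + l.+2)%N by lia.
have -> : ((d1.-1 + l.+2) - d1.-1)%:Z = ((d1.-1 + l.+1) - d1.-1)%:Z + 1 by lia.
have -> : ((d1.-1 + l) - d1.-1)%:Z = ((d1.-1 + l.+1) - d1.-1)%:Z - 1 by lia.
rewrite -/u; ring.
Qed.

Lemma LZL t : (t <= d1 + k)%N -> QQ (fun i => X * ind t i - f t * dl d1 i).
Proof.
move=> Ht; case: (ltnP t d1) => Htd; first exact: LZ1.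
have H1 := LZP (j := t) ltac:(lia).
have H2 := LZ1 (t := d1.-1) ltac:(lia).
have H3 := QD (QZ X H1) H2.
apply: (Q_ext H3) => i Hi.
rewrite (@fx_ge d1 C1 t); last lia.
rewrite (@fx_ge d1 C1 d1.-1) // subnn; ring.
Qed.

Lemma CSL (N c : int) (h : nat -> int) :
  (forall t, (t <= d1 + k)%N -> (N %| h t - c * f t)%Z) ->
  forall u, (u < d1 + k)%N -> (N %| \sum_(t < n) h t * Z t u)%Z.
Proof.
move=> Hh u Hu.
case: (ltnP u d1) => Hud.
  rewrite ZCX //.
  have E1 : \sum_(t < d1) h t * C1 t u =
      \sum_(t < d1) (h t - c * f t) * C1 t u + c * \sum_(t < d1) f t * C1 t u.
    rewrite mulr_sumr -big_split; apply: eq_bigr => t _ /=; ring.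
  have E2 : \sum_(t < d1) f t * C1 t u = D * ind d1.-1 u.
    rewrite -L1 //; apply: eq_bigr => t _; by rewrite fx_lt.
  rewrite E1 E2.
  have -> : \sum_(t < d1) (h t - c * f t) * C1 t u + c * (D * ind d1.-1 u) -
      (if u == d1.-1 then h d1 else 0) =
      \sum_(t < d1) (h t - c * f t) * C1 t u - (if u == d1.-1 then h d1 - c * f d1 else 0).
    rewrite fx_d // /ind eq_sym; case: ifP => _; ring.
  apply: rpredB.
    apply: rpred_sum => t _; apply: dvdz_mulr; apply: Hh; have := ltn_ord t; lia.
  case: ifP => _; [apply: Hh; lia | exact: dvdz0].
rewrite ZCP //; try lia.
have E : 2 * h u - h u.-1 - h u.+1 =
   2 * (h u - c * f u) - (h u.-1 - c * f u.-1) - (h u.+1 - c * f u.+1)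
   + c * (2 * f u - (f u.-1 + f u.+1)).
  ring.
rewrite E fx_lin; last lia.
rewrite subrr mulr0 addr0.
apply: rpredB; [apply: rpredB|]; try (apply: Hh; lia).
apply: dvdz_mull; apply: Hh; lia.
Qed.

Lemma HX (z : seq int) : (ell z <= d1 + k)%N ->
  QQ (fun i => X * sq z i.+1 - (\sum_(t < n) sq z t.+1 * f t) * dl d1 i).
Proof.
move=> Hz.
have H : QQ (fun i => \sum_(t < n) sq z t.+1 * (X * ind t i - f t * dl d1 i)).
  apply: (@Qsum n Z n (fun t i => sq z t.+1 * (X * ind t i - f t * dl d1 i))) => t Ht.
  case: (leqP t (d1 + k)) => Htk.
    exact: (QZ _ (LZL Htk)).
  have -> : sq z t.+1 = 0.
    apply/eqP; apply: contraT => Hn; have := ell_bound Hn; lia.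
  apply: (Q_ext (Q0 _ _)) => i _; ring.
apply: (Q_ext H) => i Hi.
rewrite (eq_bigr (fun t : 'I_n => sq z t.+1 * (X * ind i t) - (sq z t.+1 * f t) * dl d1 i));
  last by move=> t _; rewrite ind_sym; ring.
rewrite sumrB -mulr_suml.
rewrite (eq_bigr (fun t : 'I_n => sq z t.+1 * (X * ind i t))) //.
rewrite sum_ind_c Hi; ring.
Qed.

End OneSide.

Lemma ind_mir n i j : (i < n)%N -> (j < n)%N -> ind j (n - 1 - i) = ind (n - 1 - j) i.
Proof. move=> Hi Hj; rewrite /ind; case: eqP; case: eqP => //; lia. Qed.

Lemma eq_by (a b c e : int) : a - b = (e - 1) * c -> e = 1 -> a = b.
Proof. move=> H He; apply/eqP; rewrite -subr_eq0 H He subrr mul0r. by []. Qed.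

Section Main.
Variables (d1 d2 k : nat) (C1 C2 : nat -> nat -> int) (a1 a2 : nat -> int).
Hypotheses (Hd1 : (0 < d1)%N) (Hd2 : (0 < d2)%N) (Hk : (0 < k)%N).
Hypotheses (He1 : extensible d1 C1) (He2 : extensible d2 C2)
  (Hco : coprimez (Delta d1 C1) (Delta d2 C2))
  (Ha1 : is_a_seq d1 C1 a1) (Ha2 : is_a_seq d2 C2 a2).

Local Notation n := (d1 + d2 + k)%N.
Local Notation Z := (zmat d1 C1 d2 C2 k).
Local Notation QQ := (in_root_lattice n Z).
Local Notation X1 := (Delta d1 C1).
Local Notation X2 := (Delta d2 C2).
Local Notation f1 := (fx d1 C1).
Local Notation f2 := (fx d2 C2).
Local Notation dt := (dl d1).

Lemma PP : QQ (fun i => ind (d1 + k) i - ind (d1 + k - 1) i - dt i).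
Proof.
have P1 := LZP C1 C2 Hd1 Hd2 Hk (j := (d1 + k)%N) ltac:(lia).
have P0 := LZP C1 C2 Hd1 Hd2 Hk (j := (d1 + k - 1)%N) ltac:(lia).
apply: (Q_ext (QB P1 P0)) => i Hi.
have -> : ((d1 + k) - d1.-1)%:Z = ((d1 + k - 1) - d1.-1)%:Z + 1 by lia.
ring.
Qed.

Lemma RL t : (t <= d2 + k)%N -> QQ (fun i => X2 * ind (n - 1 - t) i + f2 t * dt i).
Proof.
move=> Ht.
have H := LZL C1 Hd2 Hd1 Hk He2 Ha2 Ht.
have H' := Q_swap H.
apply: (Q_ext (QB H' (QZ (f2 t) PP))) => i Hi.
rewrite ind_mir //; last lia.
rewrite /dl !ind_mir //; try lia.
have -> : (n - 1 - d2)%N = (d1 + k - 1)%N by lia.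
have -> : (n - 1 - d2.-1)%N = (d1 + k)%N by lia.
ring.
Qed.

Lemma genA t : (d1.-1 <= t <= d1 + k)%N -> exists c, QQ (fun i => ind t i - c * dt i).
Proof.
move=> /andP [H1 H2].
have L := LZL C2 Hd1 Hd2 Hk He1 Ha1 H2.
have R := RL (t := (n - 1 - t)%N) ltac:(lia).
have ER : (n - 1 - (n - 1 - t))%N = t by lia.
rewrite ER in R.
have [u [v Huv]] := bz_coprime Hco.
exists (u * f1 t - v * f2 (n - 1 - t)%N).
apply: (Qlin L R (z1 := u) (z2 := v)) => i Hi.
symmetry; apply: (@eq_by _ _ (ind t i) _ _ Huv); ring.
Qed.

Lemma gen t : (t < n)%N -> exists c, QQ (fun i => ind t i - c * dt i).
Proof.
move=> Ht.
case: (leqP d1.-1 t) => H1.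
  case: (leqP t (d1 + k)) => H2; first by apply: genA; lia.
  set t' := (n - 1 - t)%N.
  have Ht' : (t' < d2)%N by rewrite /t'; lia.
  have L3' := Q_swap (LZ3 C2 C1 Hd2 Hd1 Hk Ht').
  have R := RL (t := t') ltac:(lia).
  have [c' G'] := genA (t := (d1 + k - 1)%N) ltac:(lia).
  case: He2 => HD2 _ Hc2.
  have [u [v Huv]] := bz_coprime Hc2.
  exists (u * Fx d2 C2 t' * c' - v * f2 t').
  have H3 := QD (QD (QZ u L3') (QZ (u * Fx d2 C2 t') G')) (QZ v R).
  apply: (Q_ext H3) => i Hi.
  rewrite !ind_mir //; try lia.
  have -> : (n - 1 - t')%N = t by rewrite /t'; lia.
  have -> : (n - 1 - d2)%N = (d1 + k - 1)%N by lia.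
  apply: (@eq_by _ _ (ind t i) _ _ Huv); ring.
have Htd : (t < d1)%N by lia.
have L3 := LZ3 C1 C2 Hd1 Hd2 Hk Htd.
have L := LZL C2 Hd1 Hd2 Hk He1 Ha1 (t := t) ltac:(lia).
have [c1 G1] := genA (t := d1) ltac:(lia).
case: He1 => HD1 _ Hc1.
have [u [v Huv]] := bz_coprime Hc1.
exists (u * Fx d1 C1 t * c1 + v * f1 t).
have H3 := QD (QD (QZ u L3) (QZ (u * Fx d1 C1 t) G1)) (QZ v L).
apply: (Q_ext H3) => i Hi.
apply: (@eq_by _ _ (ind t i) _ _ Huv); ring.
Qed.

Definition NN := X2 * f1 (d1 + k) + X1 * f2 d2.-1.

Lemma Ndt : QQ (fun i => NN * dt i).
Proof.
have L := LZL C2 Hd1 Hd2 Hk He1 Ha1 (t := (d1 + k)%N) (leqnn _).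
have R := RL (t := d2.-1) ltac:(lia).
have ER : (n - 1 - d2.-1)%N = (d1 + k)%N by lia.
rewrite ER in R.
apply: (Q_ext (QB (QZ X1 R) (QZ X2 L))) => i Hi.
rewrite /NN; ring.
Qed.


Lemma Gl (x y : seq int) : gamma_defined d1 d2 x y k ->
  QQ (fun i => X1 * X2 * gamma_k d1 d2 x y k i - boxes d1 C1 d2 C2 a1 a2 x y * dt i).
Proof.
rewrite /gamma_defined /lsg /rsg => Hg.
have Hx : (ell x <= d1 + k)%N by lia.
have Hy : (ell y <= d2 + k)%N by lia.
have HXx := HX C2 Hd1 Hd2 Hk He1 Ha1 Hx.
have HXy := Q_swap (HX C1 Hd2 Hd1 Hk He2 Ha2 Hy).
have Ebx : \sum_(i < size x) nth 0 x i * a1 i.+1 = \sum_(t < n) sq x t.+1 * f1 t.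
  rewrite (eq_bigr (fun i : 'I_(size x) => nth 0 x i * f1 i)); last first.
    by move=> i _; rewrite (L4 Hd1 He1 Ha1).
  rewrite -(@sum_seq x f1 n) //; lia.
have Eby : \sum_(i < size y) nth 0 y i * a2 i.+1 = \sum_(t < d2 + d1 + k) sq y t.+1 * f2 t.
  rewrite (eq_bigr (fun i : 'I_(size y) => nth 0 y i * f2 i)); last first.
    by move=> i _; rewrite (L4 Hd2 He2 Ha2).
  rewrite -(@sum_seq y f2 (d2 + d1 + k)%N) //; lia.
set Sy := \sum_(t < d2 + d1 + k) sq y t.+1 * f2 t in Eby HXy.
have H3 := QD (QD (QZ X2 HXx) (QZ X1 HXy)) (QZ (- (X1 * Sy)) PP).
apply: (Q_ext H3) => i Hi.
rewrite /gamma_k /boxes Ebx Eby /dl !ind_mir //; try lia.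
have -> : (n - 1 - d2)%N = (d1 + k - 1)%N by lia.
have -> : (n - 1 - d2.-1)%N = (d1 + k)%N by lia.
have -> : (n - 1 - i).+1 = (d1 + d2 + k - i)%N by lia.
rewrite /dl; ring.
Qed.

Lemma partial_gen (gm : nat -> int) m : (m <= n)%N ->
  exists c, QQ (fun i => \sum_(t < m) gm t * ind t i - c * dt i).
Proof.
elim: m => [|m IH] Hm.
  exists 0; apply: (Q_ext (Q0 _ _)) => i _; rewrite big_ord0; ring.
have [c Hc] := IH (ltnW Hm).
have [c' Hc'] := gen (t := m) Hm.
exists (c + gm m * c').
apply: (Q_ext (QD Hc (QZ (gm m) Hc'))) => i _.
rewrite big_ord_recr /=; ring.
Qed.

Lemma bzN : bz (X1 * X2) NN.
Proof.
case: He1 => HD1 _ Hc1; case: He2 => HD2 _ Hc2.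
have Ef1 : f1 (d1 + k) = detC d1 C1 - X1 + (k%:Z + 1) * X1.
  rewrite fx_ge; last lia.
  have -> : ((d1 + k) - d1.-1)%:Z = k%:Z + 1 by lia.
  rewrite /Delta; ring.
have Ef2 : f2 d2.-1 = detC d2 C2 - X2.
  rewrite fx_ge // subnn /Delta; ring.
have B1 : bz X1 NN.
  have -> : NN = X2 * detC d1 C1 + (X2 * k%:Z + f2 d2.-1) * X1.
    rewrite /NN Ef1; ring.
  apply: bz_shift; apply: bz_mul; first exact: bz_coprime.
  exact: bz_sym (bz_coprime Hc1).
have B2 : bz X2 NN.
  have -> : NN = X1 * detC d2 C2 + (f1 (d1 + k) - X1) * X2.
    rewrite /NN Ef2; ring.
  apply: bz_shift; apply: bz_mul; first exact: bz_sym (bz_coprime Hco).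
  exact: bz_sym (bz_coprime Hc2).
apply: bz_sym; apply: bz_mul; exact: bz_sym.
Qed.

Lemma mainA x y : gamma_defined d1 d2 x y k -> boxes d1 C1 d2 C2 a1 a2 x y = 0 ->
  gamma_in_Q d1 C1 d2 C2 x y k.
Proof.
move=> Hg Hb.
set gm := gamma_k d1 d2 x y k.
have [c Hc] := partial_gen gm (leqnn n).
have HC : QQ (fun i => gm i - c * dt i).
  apply: (Q_ext Hc) => i Hi.
  rewrite (eq_bigr (fun t : 'I_n => gm t * ind i t)); last by move=> t _; rewrite ind_sym.
  by rewrite sum_ind Hi.
have HG := Gl Hg; rewrite Hb in HG.
have H1 : QQ (fun i => X1 * X2 * c * dt i).
  apply: (Q_ext (QB HG (QZ (X1 * X2) HC))) => i _; ring.
have [u [v Huv]] := bzN.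
have H2 : QQ (fun i => c * dt i).
  apply: (Q_ext (QD (QZ u H1) (QZ (v * c) Ndt))) => i _.
  apply: (@eq_by _ _ (c * dt i) _ _ Huv); rewrite /NN; ring.
rewrite /gamma_in_Q.
apply: (Q_ext (QD HC H2)) => i _; rewrite /gm; ring.
Qed.

Definition gfun t : int := if (t < d1 + k)%N then X2 * f1 t else - (X1 * f2 (n - 1 - t)%N).

Lemma Fn c : QQ c -> (NN %| \sum_(t < n) gfun t * c t)%Z.
Proof.
move=> [v Hv].
rewrite (eq_bigr (fun t : 'I_n => \sum_(u < n) gfun t * (Z t u * v u))); last first.
  by move=> t _; rewrite Hv // mulr_sumr.
rewrite exchange_big /=; apply: rpred_sum => u _.
rewrite (eq_bigr (fun t : 'I_n => (gfun t * Z t u) * v u)); last by move=> t _; rewrite mulrA.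
rewrite -mulr_suml; apply: dvdz_mulr.
case: (ltnP u (d1 + k)) => Hu.
  apply: (CSL C2 Hd1 Hd2 Hk (c := X2)) => // t Ht.
  rewrite /gfun; case: ifP => Htk; first by rewrite subrr dvdz0.
  have -> : t = (d1 + k)%N by lia.
  have -> : (n - 1 - (d1 + k))%N = d2.-1 by lia.
  have -> : - (X1 * f2 d2.-1) - X2 * f1 (d1 + k) = - NN by rewrite /NN; ring.
  by rewrite rpredN dvdzz.
set u' := (n - 1 - u)%N.
have Hu' : (u' < d2 + k)%N by rewrite /u'; lia.
rewrite (sum_rev n (fun t => gfun t * Z t u)).
have E : \sum_(t < n) gfun (n - 1 - t)%N * Z (n - 1 - t)%N u =
    - \sum_(t < d2 + d1 + k) (- gfun (d2 + d1 + k - 1 - t)%N) * zmat d2 C2 d1 C1 k t u'.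
  rewrite -sumrN (addnC d2 d1); apply: eq_bigr => t _.
  have Eu : (u : nat) = (n - 1 - u')%N by rewrite /u'; have := ltn_ord u; lia.
  rewrite Eu.
  have Ht := ltn_ord t.
  rewrite -(zmat_mirror C2 C1 (d1 := d2) (d2 := d1) (k := k) (t := t) (u := u')); try lia.
  have -> : (d2 + d1 + k - 1 - t)%N = (n - 1 - t)%N by lia.
  have -> : (d2 + d1 + k - 1 - u')%N = (n - 1 - u')%N by lia.
  ring.
rewrite E rpredN.
apply: (CSL C1 Hd2 Hd1 Hk (c := X1) (h := fun t => - gfun (d2 + d1 + k - 1 - t)%N)) => // t Ht.
rewrite /gfun.
case: ifP => Htk.
  have -> : - (X2 * f1 (d2 + d1 + k - 1 - t)%N) - X1 * f2 t = - NN.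
    rewrite /NN !fx_ge; try lia.
    have E1 : ((d2 + d1 + k - 1 - t) - d1.-1)%:Z = k%:Z + 1 - (t - d2.-1)%:Z by lia.
    have E2 : ((d1 + k) - d1.-1)%:Z = k%:Z + 1 by lia.
    rewrite E1 E2 subnn; ring.
  by rewrite rpredN dvdzz.
have -> : (n - 1 - (d2 + d1 + k - 1 - t))%N = t by lia.
by rewrite opprK subrr dvdz0.
Qed.

Lemma mainB x y : gamma_defined d1 d2 x y k -> gamma_in_Q d1 C1 d2 C2 x y k ->
  (NN %| boxes d1 C1 d2 C2 a1 a2 x y)%Z.
Proof.
move=> Hg HQ.
set b := boxes d1 C1 d2 C2 a1 a2 x y.
have HG := Gl Hg.
have H1 : QQ (fun i => b * dt i).
  apply: (Q_ext (QB (QZ (X1 * X2) HQ) HG)) => i _; rewrite /b; ring.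
have := Fn H1.
have -> : \sum_(t < n) gfun t * (b * dt t) = b * (X1 * X2).
  rewrite (eq_bigr (fun t : 'I_n => gfun t * (b * ind d1 t) - gfun t * (b * ind d1.-1 t)));
    last by move=> t _; rewrite /dl; ring.
  rewrite sumrB !sum_ind_c !ifT; try lia.
  rewrite /gfun !ifT; try lia.
  rewrite fx_d // fx_ge // subnn /Delta; ring.
move=> Hd.
have [u [v Huv]] := bzN.
have -> : b = b * (u * (X1 * X2) + v * NN) by rewrite Huv mulr1.
rewrite mulrDr; apply: rpredD.
  have -> : b * (u * (X1 * X2)) = u * (b * (X1 * X2)) by ring.
  exact: dvdz_mull.
have -> : b * (v * NN) = (b * v) * NN by ring.
by apply: dvdz_mull; exact: dvdzz.
Qed.

End Main.

Lemma NN_form d1 d2 k C1 C2 : (0 < d1)%N -> (0 < d2)%N ->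
  NN d1 d2 k C1 C2 = (Delta d2 C2 * detC d1.-1 C1 + Delta d1 C1 * Delta d2 C2
     + Delta d1 C1 * detC d2.-1 C2) + k%:Z * (Delta d1 C1 * Delta d2 C2).
Proof.
move=> H1 H2; rewrite /NN !fx_ge; try lia.
have -> : ((d1 + k) - d1.-1)%:Z = k%:Z + 1 by lia.
rewrite subnn; ring.
Qed.

Unset Implicit Arguments.

Theorem corollary4p4 (d1 d2 : nat) (C1 C2 : nat -> nat -> int)
  (a1 a2 : nat -> int) (x y : seq int) :
  marked_diagram d1 C1 -> marked_diagram d2 C2 ->
  extensible_pair d1 C1 d2 C2 ->
  is_a_seq d1 C1 a1 -> is_a_seq d2 C2 a2 ->
  (boxes d1 C1 d2 C2 a1 a2 x y = 0 <->
   exists N : nat, forall k : nat, (N <= k)%N -> gamma_defined d1 d2 x y k ->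
     gamma_in_Q d1 C1 d2 C2 x y k) /\
  (boxes d1 C1 d2 C2 a1 a2 x y = 0 <->
   forall N : nat, exists k : nat, [/\ (N <= k)%N, gamma_defined d1 d2 x y k &
     gamma_in_Q d1 C1 d2 C2 x y k]).
Proof.
move=> [Hd1 _ _] [Hd2 _ _] [He1 He2 Hco] Ha1 Ha2.
set b := boxes d1 C1 d2 C2 a1 a2 x y.
set K0 := (lsg d1 x + rsg d2 y)%N.
have Hdef : forall k, (K0 <= k)%N -> gamma_defined d1 d2 x y k.
  by move=> k Hk; rewrite /gamma_defined -/K0; lia.
have i_ii : b = 0 -> exists N : nat, forall k : nat, (N <= k)%N -> gamma_defined d1 d2 x y k ->
     gamma_in_Q d1 C1 d2 C2 x y k.
  move=> Hb; exists 1%N => k Hk Hg.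
  exact: (mainA Hd1 Hd2 Hk He1 He2 Hco Ha1 Ha2 Hg Hb).
have ii_iii : (exists N : nat, forall k : nat, (N <= k)%N -> gamma_defined d1 d2 x y k ->
     gamma_in_Q d1 C1 d2 C2 x y k) ->
   forall N : nat, exists k : nat, [/\ (N <= k)%N, gamma_defined d1 d2 x y k &
     gamma_in_Q d1 C1 d2 C2 x y k].
  move=> [N0 HN] N; exists (N0 + N + K0)%N.
  have Hg := Hdef (N0 + N + K0)%N (leq_addl _ _).
  split => //; first lia.
  apply: HN => //; lia.
have iii_i : (forall N : nat, exists k : nat, [/\ (N <= k)%N, gamma_defined d1 d2 x y k &
     gamma_in_Q d1 C1 d2 C2 x y k]) -> b = 0.
  move=> H.
  set c0 := (Delta d2 C2 * detC d1.-1 C1 + Delta d1 C1 * Delta d2 C2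
     + Delta d1 C1 * detC d2.-1 C2).
  have [k [Hk Hg HQ]] := H (absz c0 + absz b + 1)%N.
  have Hk1 : (0 < k)%N by lia.
  have Hdv := mainB Hd1 Hd2 Hk1 He1 He2 Hco Ha1 Ha2 Hg HQ.
  rewrite NN_form // -/c0 in Hdv.
  apply: (small_dvd Hdv).
  have HX : Delta d1 C1 * Delta d2 C2 != 0.
    by case: He1 => _ H1 _; case: He2 => _ H2 _; rewrite mulf_neq0.
  apply: (bound HX); lia.
split; split.
- exact: i_ii.
- by move=> H; apply: iii_i; apply: ii_iii.
- by move=> Hb; apply: ii_iii; apply: i_ii.
- exact: iii_i.
Qed.
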